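(* Let $(A_1,X_1)$ and $(A_2,X_2)$ be two graphs that cannot be distinguished by the 1-WL algorithm. Then any Graph U-Net-th network computes the same vector representation for them.
   Context: A graph is given by a symmetric adjacency matrix $A$ (possibly a multigraph with nonnegative integer entries) and node features $X$. The 1-WL (color refinement) algorithm starts from initial colors given by node features and iteratively recolors each node by (its current color, multiset of neighbors' current colors, counted with multiplicity) until stable. Two graphs ''cannot be distinguished by the 1-WL algorithm'' means: running 1-WL on their disjoint union, every stable color class contains the same number of nodes from each graph. A node-level map is 1-WL-bounded if the representation it assigns to a node depends only on the node's stable 1-WL color (computed on the disjoint union of the graphs under consideration); standard message-passing GNN layers are of this type. A Graph U-Net-th pooling layer, with fixed projection vector $p$, threshold $\beta\in\mathbb{R}$ and fixed integer $\ell\ge1$, maps an input $(A,H)$ to $(A^\ell[b,b],\,H[b])$, where $v=Hp$, $b$ is the indicator vector $b_i=1[v_i\ge\beta]$, and $M[b,b]$, $H[b]$ denote restriction to rows/columns with $b_i=1$. A Graph U-Net-th network alternates 1-WL-bounded GNN layers (applied to the current (multi)graph and features) with such pooling layers, and ends with a permutation-invariant readout of the final node representations. *)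

(* Defs.v *)
(* Graphs are given on an arbitrary finite node type V:
   a (multi)graph is an adjacency function A : V -> V -> nat (entry A u v =
   number of edges between u and v), node features are H : V -> 'rV[R]_d
   (row i of the feature matrix). *)
From HB Require Import structures.
From mathcomp Require Import all_boot all_order all_algebra.
From mathcomp Require Import boolp reals.
Set Implicit Arguments. Unset Strict Implicit. Unset Printing Implicit Defensive.
Import Order.TTheory GRing.Theory Num.Theory.
Local Open Scope ring_scope.

Section Defs.
Variable R : realType.

Definition adj_sym (V : finType) (A : V -> V -> nat) : Prop :=
  forall u v, A u v = A v u.

(** 1-WL colour refinement, colours represented by the partition they induce:
    [wl_rel A X t x y] <-> x and y have the same colour after t rounds.  Round t+1: same colour at round t and the
    same multiset of neighbours' round-t colours counted with multiplicity,
    i.e. for every round-t colour class (class of some w), the number of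
    edges (with multiplicity) from x into that class equals that from y. *)
Fixpoint wl_rel (V : finType) (d : nat) (A : V -> V -> nat)
    (X : V -> 'rV[R]_d) (t : nat) : rel V :=
  match t with
  | 0 => fun x y => X x == X y
  | t.+1 => fun x y =>
      wl_rel A X t x y &&
      [forall w, (\sum_(u | wl_rel A X t u w) A x u ==
                  \sum_(u | wl_rel A X t u w) A y u)%N]
  end.

(** stable 1-WL colouring: the partition reached once refinement stabilises
    (refinement is monotone, so this is the intersection over all rounds). *)
Definition wl_stable (V : finType) (d : nat) (A : V -> V -> nat)
    (X : V -> 'rV[R]_d) : rel V :=
  fun x y => `[< forall t, wl_rel A X t x y >].

Definition union_adj (V1 V2 : finType) (A1 : V1 -> V1 -> nat)
    (A2 : V2 -> V2 -> nat) : (V1 + V2)%type -> (V1 + V2)%type -> nat :=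
  fun x y => match x, y with
             | inl a, inl b => A1 a b
             | inr a, inr b => A2 a b
             | _, _ => 0%N
             end.

Definition union_feat (V1 V2 : finType) (T : Type) (X1 : V1 -> T)
    (X2 : V2 -> T) : (V1 + V2)%type -> T :=
  fun x => match x with inl a => X1 a | inr b => X2 b end.

(** (A1,X1) and (A2,X2) cannot be distinguished by 1-WL: on the disjoint
    union, every stable colour class has as many nodes from each graph. *)
Definition wl_indist (V1 V2 : finType) (d : nat)
    (A1 : V1 -> V1 -> nat) (X1 : V1 -> 'rV[R]_d)
    (A2 : V2 -> V2 -> nat) (X2 : V2 -> 'rV[R]_d) : Prop :=
  let A := union_adj A1 A2 in
  let X := union_feat X1 X2 in
  forall w : (V1 + V2)%type,
    #|[pred a : V1 | wl_stable A X (inl a) w]| =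
    #|[pred b : V2 | wl_stable A X (inr b) w]|.

Definition layer_fn (d d' : nat) :=
  forall V : finType, (V -> V -> nat) -> (V -> 'rV[R]_d) -> V -> 'rV[R]_d'.

Definition wl_bounded (d d' : nat) (f : layer_fn d d') : Prop :=
  forall (V1 V2 : finType) (A1 : V1 -> V1 -> nat) (X1 : V1 -> 'rV[R]_d)
         (A2 : V2 -> V2 -> nat) (X2 : V2 -> 'rV[R]_d),
    adj_sym A1 -> adj_sym A2 ->
    forall x y : (V1 + V2)%type,
      wl_stable (union_adj A1 A2) (union_feat X1 X2) x y ->
      union_feat (f V1 A1 X1) (f V2 A2 X2) x =
      union_feat (f V1 A1 X1) (f V2 A2 X2) y.

Definition readout_fn (d k : nat) :=
  forall V : finType, (V -> 'rV[R]_d) -> 'rV[R]_k.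

Definition perm_invariant (d k : nat) (r : readout_fn d k) : Prop :=
  forall (V1 V2 : finType) (g : V1 -> V2), bijective g ->
    forall H : V2 -> 'rV[R]_d, r V1 (H \o g) = r V2 H.

Fixpoint apow (V : finType) (A : V -> V -> nat) (l : nat) : V -> V -> nat :=
  match l with
  | 0 => fun u v => nat_of_bool (u == v)
  | l.+1 => fun u v => (\sum_w apow A l u w * A w v)%N
  end.

Definition pool_keep (V : finType) (d : nat) (p : 'cV[R]_d) (beta : R)
    (H : V -> 'rV[R]_d) : pred V :=
  fun i => beta <= (H i *m p) 0 0.

(** Graph U-Net-th networks with input dimension d, output dimension k. *)
Inductive unet (k : nat) : nat -> Type :=
| UReadout d : readout_fn d k -> unet k d
| UGNN d d' : layer_fn d d' -> unet k d' -> unet k d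
| UPool d : 'cV[R]_d -> R -> nat -> unet k d -> unet k d.

Fixpoint unet_ok (k d : nat) (N : unet k d) : Prop :=
  match N with
  | UReadout _ r => perm_invariant r
  | UGNN _ _ f N' => wl_bounded f /\ unet_ok N'
  | UPool _ _ _ l N' => (1 <= l)%N /\ unet_ok N'
  end.

Fixpoint unet_eval (k d : nat) (N : unet k d) :
    forall V : finType, (V -> V -> nat) -> (V -> 'rV[R]_d) -> 'rV[R]_k :=
  match N in unet _ d return
        forall V : finType, (V -> V -> nat) -> (V -> 'rV[R]_d) -> 'rV[R]_k with
  | UReadout _ r => fun V A H => r V H
  | UGNN _ _ f N' => fun V A H => unet_eval N' A (f V A H)
  | UPool _ p beta l N' => fun V A H =>
      @unet_eval _ _ N' {i : V | pool_keep p beta H i}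
        (fun i j => apow A l (val i) (val j)) (fun i => H (val i))
  end.

End Defs.

(* Main.v *)
Require Import Defs.
From HB Require Import structures.
From mathcomp Require Import all_boot all_order all_algebra all_fingroup.
From mathcomp Require Import boolp reals.
From mathcomp Require Import zify.
Set Implicit Arguments. Unset Strict Implicit. Unset Printing Implicit Defensive.

Definition equivr (U : finType) (r : rel U) :=
  [/\ forall x, r x x, forall x y, r x y -> r y x &
      forall x y z, r x y -> r y z -> r x z].

Lemma closed_sum (U : finType) (r : rel U) (F G : U -> nat) :
  equivr r ->
  (forall w, \sum_(u | r u w) F u = \sum_(u | r u w) G u)%N ->
  forall (S : pred U) (g : U -> nat),
  (forall u v, r u v -> S u = S v) -> (forall u v, r u v -> g u = g v) ->
  (\sum_(u | S u) F u * g u = \sum_(u | S u) G u * g u)%N.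
Proof.
move=> [rr rs rt] hFG S g hS hg.
move: {2}#|S| (leqnn #|S|) => n; elim: n S hS => [|n IH] S hS hcard.
  case: (pickP S) => [w0 Sw0 | S0]; last by rewrite !big_pred0.
  have : (0 < #|S|)%N by apply/card_gt0P; exists w0.
  by rewrite ltnNge hcard.
case: (pickP S) => [w0 Sw0 | S0]; last by rewrite !big_pred0.
rewrite (bigID (fun u => r u w0)) [RHS](bigID (fun u => r u w0)) /=.
have E1 : forall H : U -> nat,
   (\sum_(u | S u && r u w0) H u * g u = (\sum_(u | r u w0) H u) * g w0)%N.
  move=> H; rewrite big_distrl /=; apply: eq_big => u.
    case ru: (r u w0); rewrite ?andbT ?andbF //. by rewrite (hS u w0 ru).
  by move=> /andP[_ ru]; rewrite (hg u w0 ru).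
rewrite !E1 hFG; congr (_ + _)%N.
apply: (IH [pred u | S u && ~~ r u w0]).
  move=> u v ruv /=; rewrite (hS u v ruv).
  have -> : r u w0 = r v w0.
    apply/idP/idP => h; [exact: rt (rs _ _ ruv) h | exact: rt ruv h].
  by [].
have := cardID [pred u | r u w0] S.
have : (0 < #|[predI S & [pred u | r u w0]]|)%N.
  by apply/card_gt0P; exists w0; rewrite !inE; apply/andP; split=> //; apply: rr.
move=> h1 h2.
have -> : #|[pred u | S u && ~~ r u w0]| = #|[predD S & [pred u | r u w0]]|.
  by apply: eq_card => u; rewrite !inE andbC.
move: hcard; rewrite -h2; move: h1; set a := #|_|; set b := #|_|.
move=> h1 h3; lia.
Qed.

Section WL.
Variables (R : realType) (U : finType) (d : nat) (A : U -> U -> nat)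
  (X : U -> 'rV[R]_d).

Lemma wl_equiv t : equivr (wl_rel A X t).
Proof.
elim: t => [|t [rr rs rt]] /=.
  split=> [x|x y /eqP->|x y z /eqP-> /eqP->] //.
split.
- by move=> x; rewrite rr; apply/forallP.
- move=> x y /andP[h /forallP hf]; rewrite rs //=; apply/forallP => w.
  by rewrite eq_sym hf.
- move=> x y z /andP[h1 /forallP hf1] /andP[h2 /forallP hf2].
  rewrite (rt _ _ _ h1 h2) /=; apply/forallP => w.
  by rewrite (eqP (hf1 w)) hf2.
Qed.

Lemma wl_mono t x y : wl_rel A X t.+1 x y -> wl_rel A X t x y.
Proof. by case/andP. Qed.

Lemma wl_mono_le t t' x y : (t <= t')%N -> wl_rel A X t' x y -> wl_rel A X t x y.
Proof.
move=> /subnK <-; elim: (t' - t)%N => [//|n IH] h; apply: IH.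
by rewrite addSn in h; apply: wl_mono.
Qed.

Lemma stable_rel t x y : wl_stable A X x y -> wl_rel A X t x y.
Proof. by move/asboolP. Qed.

Lemma stable_equiv : equivr (wl_stable A X).
Proof.
split.
- by move=> x; apply/asboolP => t; case: (wl_equiv t).
- move=> x y /asboolP h; apply/asboolP => t; case: (wl_equiv t) => _ rs _.
  exact: rs.
- move=> x y z /asboolP h1 /asboolP h2; apply/asboolP => t.
  case: (wl_equiv t) => _ _ rt; exact: rt (h1 t) (h2 t).
Qed.

Lemma stabilize_seq (s : seq (U * U)) : exists T, forall p, p \in s ->
  wl_rel A X T p.1 p.2 -> wl_stable A X p.1 p.2.
Proof.
elim: s => [|p s [T IH]]; first by exists 0%N.
have [T0 H0] : exists T0, wl_rel A X T0 p.1 p.2 -> wl_stable A X p.1 p.2.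
  have [st|nst] := boolP (wl_stable A X p.1 p.2); first by exists 0%N.
  move/asboolPn: nst => /existsNP [t ht]; exists t => h; exfalso; exact: ht.
exists (maxn T T0) => q; rewrite inE => /orP[/eqP->|qs] h.
  by apply: H0; apply: wl_mono_le h; rewrite leq_maxr.
by apply: IH => //; apply: wl_mono_le h; rewrite leq_maxl.
Qed.

Lemma stabilize : exists T, forall x y, wl_rel A X T x y -> wl_stable A X x y.
Proof.
have [T H] := stabilize_seq (enum {: U * U}).
by exists T => x y; apply: (H (x, y)); rewrite mem_enum.
Qed.

Lemma stable_eqtbl x y : wl_stable A X x y -> forall w,
  (\sum_(u | wl_stable A X u w) A x u = \sum_(u | wl_stable A X u w) A y u)%N.
Proof.
have [T HT] := stabilize.
move=> /asboolP /(_ T.+1) /andP[_ /forallP hf] w.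
have E : forall u, wl_stable A X u w = wl_rel A X T u w.
  move=> u; apply/idP/idP; [exact: stable_rel | exact: HT].
by rewrite !(eq_bigl _ _ E) (eqP (hf w)).
Qed.

Lemma coarsest (r : rel U) : equivr r -> (forall x y, r x y -> X x = X y) ->
  (forall x y, r x y -> forall w,
     \sum_(u | r u w) A x u = \sum_(u | r u w) A y u)%N ->
  forall x y, r x y -> wl_stable A X x y.
Proof.
move=> req hX hA x y rxy; apply/asboolP => t.
elim: t x y rxy => [|t IH] x y rxy /=; first by rewrite (hX _ _ rxy).
rewrite IH //=; apply/forallP => w; apply/eqP.
have := closed_sum (F := A x) (G := A y) req (hA x y rxy)
  (S := [pred u | wl_rel A X t u w]) (g := fun _ => 1%N).
rewrite !(eq_bigr _ (fun i _ => muln1 _)); apply => // u v ruv /=.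
case: (wl_equiv t) => _ rs rt.
have := IH _ _ ruv => h; apply/idP/idP => h'.
  exact: rt (rs _ _ h) h'.
exact: rt h h'.
Qed.

End WL.

Definition isl (V1 V2 : finType) (u : (V1 + V2)%type) : nat :=
  if u is inl _ then 1%N else 0%N.
Definition isr (V1 V2 : finType) (u : (V1 + V2)%type) : nat :=
  if u is inr _ then 1%N else 0%N.

Lemma card_isl (V1 V2 : finType) (P : pred (V1 + V2)%type) :
  #|[pred a : V1 | P (inl a)]| = (\sum_(u | P u) isl u)%N.
Proof.
rewrite big_sumType /= [X in (_ + X)%N]big1 // addn0.
by rewrite -sum1_card.
Qed.

Lemma card_isr (V1 V2 : finType) (P : pred (V1 + V2)%type) :
  #|[pred b : V2 | P (inr b)]| = (\sum_(u | P u) isr u)%N.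
Proof.
rewrite big_sumType /= [X in (X + _)%N]big1 // add0n.
by rewrite -sum1_card.
Qed.

Section Union.
Variables (R : realType) (V1 V2 : finType) (d : nat)
  (A1 : V1 -> V1 -> nat) (X1 : V1 -> 'rV[R]_d)
  (A2 : V2 -> V2 -> nat) (X2 : V2 -> 'rV[R]_d).

Local Notation A := (union_adj A1 A2).
Local Notation X := (union_feat X1 X2).

Lemma indist_closed : wl_indist A1 X1 A2 X2 ->
  forall S : pred (V1 + V2)%type,
  (forall u v, wl_stable A X u v -> S u = S v) ->
  #|[pred a : V1 | S (inl a)]| = #|[pred b : V2 | S (inr b)]|.
Proof.
move=> hI S hS; rewrite card_isl card_isr.
have := closed_sum (F := @isl V1 V2) (G := @isr V1 V2) (stable_equiv A X)
  _ (S := S) (g := fun _ => 1%N) hS (fun _ _ _ => erefl).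
rewrite !(eq_bigr _ (fun i _ => muln1 _)); apply => w.
by rewrite -card_isl -card_isr; apply: hI.
Qed.

End Union.

Lemma gnn_step (R : realType) (d d' : nat) (f : layer_fn R d d')
  (V1 V2 : finType) (A1 : V1 -> V1 -> nat) (X1 : V1 -> 'rV[R]_d)
  (A2 : V2 -> V2 -> nat) (X2 : V2 -> 'rV[R]_d) :
  wl_bounded f -> adj_sym A1 -> adj_sym A2 -> wl_indist A1 X1 A2 X2 ->
  wl_indist A1 (f V1 A1 X1) A2 (f V2 A2 X2).
Proof.
move=> hf s1 s2 hI.
set X' := union_feat (f V1 A1 X1) (f V2 A2 X2).
have sub : forall x y, wl_stable (union_adj A1 A2) (union_feat X1 X2) x y ->
   wl_stable (union_adj A1 A2) X' x y.
  apply: coarsest; first exact: stable_equiv.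
    by move=> x y; apply: hf.
  exact: stable_eqtbl.
move=> w /=; apply: (indist_closed hI (S := [pred u | wl_stable (union_adj A1 A2) X' u w])).
move=> u v /sub h /=; case: (stable_equiv (union_adj A1 A2) X') => _ rs rt.
apply/idP/idP => h'; [exact: rt (rs _ _ h) h' | exact: rt h h'].
Qed.

Lemma apow_Sl (V : finType) (A : V -> V -> nat) l u v :
  apow A l.+1 u v = (\sum_w A u w * apow A l w v)%N.
Proof.
elim: l u v => [|l IH] u v.
  rewrite /= (bigD1 u) //= eqxx mul1n big1 ?addn0; last first.
    by move=> w /negbTE; rewrite eq_sym => ->.
  rewrite (bigD1 v) //= eqxx muln1 big1 ?addn0 //.
  by move=> w /negbTE ->; rewrite muln0.
change (apow A l.+2 u v) with (\sum_w apow A l.+1 u w * A w v)%N.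
rewrite (eq_bigr (fun w => \sum_z A u z * apow A l z w * A w v)%N); last first.
  by move=> w _; rewrite IH big_distrl.
rewrite exchange_big /=; apply: eq_bigr => z _.
by rewrite /= big_distrr /=; apply: eq_bigr => w _; rewrite mulnA.
Qed.

Lemma apow_sym (V : finType) (A : V -> V -> nat) l :
  adj_sym A -> adj_sym (apow A l).
Proof.
move=> sA; elim: l => [|l IH] u v; first by rewrite /= eq_sym.
rewrite apow_Sl; change (apow A l.+1 v u) with (\sum_w apow A l v w * A w u)%N;
apply: eq_bigr => w _; by rewrite IH sA mulnC.
Qed.

Lemma sum_mul0 (I : finType) (F : I -> nat) : (\sum_i F i * 0 = 0)%N.
Proof. by rewrite big1 // => i _; rewrite muln0. Qed.

Lemma apow_union (V1 V2 : finType) (A1 : V1 -> V1 -> nat)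
  (A2 : V2 -> V2 -> nat) l x y :
  apow (union_adj A1 A2) l x y = union_adj (apow A1 l) (apow A2 l) x y.
Proof.
elim: l x y => [|l IH] x y.
  by case: x => a; case: y => b.
change (apow (union_adj A1 A2) l.+1 x y) with
  (\sum_w apow (union_adj A1 A2) l x w * union_adj A1 A2 w y)%N.
rewrite big_sumType.
case: x => a; case: y => b /=.
- rewrite sum_mul0 addn0; apply: eq_bigr => c _; by rewrite IH.
- rewrite sum_mul0 add0n big1 // => c _; by rewrite IH /= mul0n.
- rewrite sum_mul0 addn0 big1 // => c _; by rewrite IH /= mul0n.
- rewrite sum_mul0 add0n; apply: eq_bigr => c _; by rewrite IH.
Qed.

Lemma sum_pred1 (V : finType) (P : pred V) x :
  (\sum_(v | P v) nat_of_bool (x == v))%N = P x.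
Proof.
case: (boolP (P x)) => Px.
  rewrite (bigD1 x) //= eqxx big1 // => v /andP[_ /negbTE].
  by rewrite eq_sym => ->.
rewrite big1 // => v Pv; case: eqP => // xv; by rewrite xv Pv in Px.
Qed.

Lemma apow_eqtbl (R : realType) (U : finType) (d : nat) (A : U -> U -> nat)
  (X : U -> 'rV[R]_d) l x y : wl_stable A X x y -> forall w,
  (\sum_(v | wl_stable A X v w) apow A l x v =
   \sum_(v | wl_stable A X v w) apow A l y v)%N.
Proof.
case: (stable_equiv A X) => rr rs rt.
elim: l x y => [|l IH] x y hxy w.
  rewrite !sum_pred1 (_ : wl_stable A X x w = wl_stable A X y w) //.
  apply/idP/idP => h; [exact: rt (rs _ _ hxy) h | exact: rt hxy h].
have E : forall x', (\sum_(v | wl_stable A X v w) apow A l.+1 x' v =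
   \sum_z apow A l x' z * \sum_(v | wl_stable A X v w) A z v)%N.
  move=> x'.
  transitivity (\sum_(v | wl_stable A X v w) \sum_z apow A l x' z * A z v)%N;
    first by [].
  by rewrite exchange_big; apply: eq_bigr => z _; rewrite big_distrr.
rewrite !E.
have := closed_sum (stable_equiv A X) (IH x y hxy) (S := predT)
  (g := fun z => \sum_(v | wl_stable A X v w) A z v)%N.
apply => // u v huv; exact: stable_eqtbl.
Qed.

Lemma sum_sig (T : finType) (K : pred T) (P : pred T) (F : T -> nat) :
  (\sum_(i : {x | K x} | P (val i)) F (val i) = \sum_(x | K x && P x) F x)%N.
Proof. by rewrite (big_sub_cond K P F). Qed.

Lemma pool_step (R : realType) (d : nat) (p : 'cV[R]_d) (beta : R) (l : nat)
  (V1 V2 : finType) (A1 : V1 -> V1 -> nat) (X1 : V1 -> 'rV[R]_d)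
  (A2 : V2 -> V2 -> nat) (X2 : V2 -> 'rV[R]_d) :
  wl_indist A1 X1 A2 X2 ->
  wl_indist (V1 := {i : V1 | pool_keep p beta X1 i})
            (V2 := {i : V2 | pool_keep p beta X2 i})
    (fun i j => apow A1 l (val i) (val j)) (fun i => X1 (val i))
    (fun i j => apow A2 l (val i) (val j)) (fun i => X2 (val i)).
Proof.
move=> hI; hnf.
set A := union_adj A1 A2; set X := union_feat X1 X2.
set A' := union_adj _ _; set X' := union_feat _ _.
pose e (x : ({i : V1 | pool_keep p beta X1 i} + {i : V2 | pool_keep p beta X2 i})%type)
  : (V1 + V2)%type :=
  match x with inl i => inl (val i) | inr j => inr (val j) end.
have hA' : forall x y, A' x y = apow A l (e x) (e y).
  by move=> x y; rewrite /A apow_union; case: x => ?; case: y => ?.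
have hX' : forall x, X' x = X (e x) by case.
have keep_e : forall x, pool_keep p beta X (e x) by case=> [[a ha]|[b hb]].
have keep_cl : forall u v, wl_stable A X u v ->
    pool_keep p beta X u = pool_keep p beta X v.
  move=> u v /(stable_rel 0) h; rewrite /pool_keep.
  by rewrite (eqP (h : X u == X v)).
have reind : forall (P : pred (V1 + V2)%type) (F : _ -> nat),
    (forall u, P u -> pool_keep p beta X u) ->
    (\sum_(x | P (e x)) F (e x) = \sum_(u | P u) F u)%N.
  move=> P F hP; rewrite big_sumType [RHS]big_sumType.
  congr addn.
    rewrite (sum_sig (fun a => pool_keep p beta X1 a) (fun a => P (inl a))
                     (fun a => F (inl a))).
    apply: eq_bigl => a; case Pa: (P (inl a)); rewrite ?andbT ?andbF //.
    exact: (hP _ Pa).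
  rewrite (sum_sig (fun a => pool_keep p beta X2 a) (fun a => P (inr a))
                   (fun a => F (inr a))).
  apply: eq_bigl => a; case Pa: (P (inr a)); rewrite ?andbT ?andbF //.
  exact: (hP _ Pa).
case: (stable_equiv A X) => rr rs rt.
pose r' := fun x y => wl_stable A X (e x) (e y).
have req : equivr r'.
  split=> [x|x y|x y z]; rewrite /r'; [exact: rr|exact: rs|exact: rt].
have hPk : forall w u, wl_stable A X u (e w) -> pool_keep p beta X u.
  by move=> w u h; rewrite (keep_cl _ _ h) keep_e.
have sub : forall x y, r' x y -> wl_stable A' X' x y.
  apply: coarsest => //.
    by move=> x y h; rewrite !hX'; apply/eqP; apply: (stable_rel 0 h).
  move=> x y h w.
  rewrite !(eq_bigr _ (fun u _ => hA' _ u)).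
  rewrite (reind (fun v => wl_stable A X v (e w)) (apow A l (e x))) ?[RHS](reind (fun v => wl_stable A X v (e w)) (apow A l (e y))); try exact: hPk.
  exact: apow_eqtbl.
move=> w'.
rewrite (card_isl (fun u => wl_stable A' X' u w')) (card_isr (fun u => wl_stable A' X' u w')).
have := closed_sum (F := @isl _ _) (G := @isr _ _) req _
  (S := [pred u | wl_stable A' X' u w']) (g := fun _ => 1%N).
rewrite !(eq_bigr _ (fun i _ => muln1 _)); apply.
- move=> w.
  rewrite (eq_bigr (fun u => isl (e u))); last by case.
  rewrite [RHS](eq_bigr (fun u => isr (e u))); last by case.
  rewrite (reind (fun v => wl_stable A X v (e w)) (@isl _ _)); last exact: hPk.
  rewrite (reind (fun v => wl_stable A X v (e w)) (@isr _ _)); last exact: hPk.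
  by rewrite -card_isl -card_isr; apply: hI.
- move=> u v /sub h /=; case: (stable_equiv A' X') => _ rs' rt'.
  apply/idP/idP => h'; [exact: rt' (rs' _ _ h) h' | exact: rt' h h'].
- by [].
Qed.

Lemma count_fenum (T : finType) (P : pred T) : count P (Finite.enum T) = #|P|.
Proof. by rewrite cardE /enum_mem size_filter. Qed.

Lemma readout_step (R : realType) (d k : nat) (r : readout_fn R d k)
  (V1 V2 : finType) (A1 : V1 -> V1 -> nat) (X1 : V1 -> 'rV[R]_d)
  (A2 : V2 -> V2 -> nat) (X2 : V2 -> 'rV[R]_d) :
  perm_invariant r -> wl_indist A1 X1 A2 X2 -> r V1 X1 = r V2 X2.
Proof.
move=> hr hI.
have hc : forall q : pred 'rV[R]_d,
    #|[pred a | q (X1 a)]| = #|[pred b | q (X2 b)]|.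
  move=> q; apply: (indist_closed hI (S := [pred u | q (union_feat X1 X2 u)])).
  move=> u v /(stable_rel 0) h /=; by rewrite (eqP (h : _ == _)).
have hperm : perm_eq (codom X1) (codom_tuple X2).
  apply/seq.permP => q; rewrite /= !codomE !count_map !count_fenum; exact: hc.
have e : #|V1| = #|V2|.
  by have := perm_size hperm; rewrite size_codom size_tuple.
case/tuple_permP: hperm => pm hpm.
pose g a := enum_val (pm (cast_ord e (enum_rank a))).
have hg : forall a, X2 (g a) = X1 a.
  move=> a.
  have := congr1 (fun s => nth (X1 a) s (enum_rank a)) hpm.
  rewrite /codom nth_image enum_rankK => ->.
  rewrite (_ : nat_of_ord (enum_rank a) = nat_of_ord (cast_ord e (enum_rank a))) //.
  by rewrite -tnth_nth tnth_mktuple (tnth_nth (X1 a)) /= /codom nth_image.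
have gbij : bijective g.
  exists (fun b => enum_val (cast_ord (esym e) ((pm^-1)%g (enum_rank b)))) => x.
    by rewrite /g enum_valK permK cast_ordK enum_rankK.
  by rewrite /g enum_valK cast_ordKV permKV enum_rankK.
have -> : X1 = X2 \o g by apply: funext => a; rewrite /= hg.
exact: hr.
Qed.

Theorem theorem2 (R : realType) (k d : nat) (N : unet R k d)
    (V1 V2 : finType)
    (A1 : V1 -> V1 -> nat) (X1 : V1 -> 'rV[R]_d)
    (A2 : V2 -> V2 -> nat) (X2 : V2 -> 'rV[R]_d) :
  unet_ok N ->
  adj_sym A1 -> adj_sym A2 ->
  wl_indist A1 X1 A2 X2 ->
  unet_eval N A1 X1 = unet_eval N A2 X2.
Proof.
elim: N V1 V2 A1 X1 A2 X2 => [d' r | d' d'' f N' IH | d' p beta l N' IH]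
  V1 V2 A1 X1 A2 X2 /=.
- move=> hr _ _ hI; exact: readout_step hr hI.
- move=> [hf hN] s1 s2 hI; apply: IH => //; exact: gnn_step.
- move=> [hl hN] s1 s2 hI; apply: IH => //.
  + by move=> i j; apply: apow_sym.
  + by move=> i j; apply: apow_sym.
  + exact: pool_step.
Qed.
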